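(* Assume $\mathrm{char}(\Bbbk)\ne2$. The set $\{M_\alpha\}_{\alpha\text{ even}}$ is a linear basis for the even subalgebra $\Pi_+$ of $(\mathcal{Q}\mathit{Sym},\zeta_{\mathcal Q})$.
   Context: $\mathcal{Q}\mathit{Sym}$ is the graded Hopf algebra of quasi-symmetric functions over $\Bbbk$ with basis $M_\alpha=\sum_{i_1<\cdots<i_k}x_{i_1}^{a_1}\cdots x_{i_k}^{a_k}$ for compositions $\alpha=(a_1,\dots,a_k)$ (degree $a_1+\cdots+a_k$; $M_{()}=1$), coproduct $\Delta(M_\alpha)=\sum_{\alpha=\beta\gamma}M_\beta\otimes M_\gamma$. $\zeta_{\mathcal Q}$ is the character with $\zeta_{\mathcal Q}(M_\alpha)=1$ if $\alpha=(n)$ or $()$, $0$ otherwise. $\bar\zeta_{\mathcal Q}(h)=(-1)^n\zeta_{\mathcal Q}(h)$ for $h$ of degree $n$. $\Pi_+$ is the largest graded subcoalgebra of $\mathcal{Q}\mathit{Sym}$ on which $\bar\zeta_{\mathcal Q}=\zeta_{\mathcal Q}$. A composition is even if all its parts are even (the empty composition counts as even). *)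

(* Defs.v *)
From HB Require Import structures.
From mathcomp Require Import all_boot all_order all_algebra.
From mathcomp Require Import boolp classical_sets fsbigop.
Set Implicit Arguments. Unset Strict Implicit. Unset Printing Implicit Defensive.
Import Order.TTheory GRing.Theory Num.Theory.
Local Open Scope classical_set_scope.
Local Open Scope ring_scope.

Definition composition (a : seq nat) : bool := all (fun x => 0 < x)%N a.
Definition even_comp (a : seq nat) : bool := all (fun x => ~~ odd x) a.

(* An element of QSym over k is encoded by its coordinate function in the
   monomial basis: h = \sum_alpha h(alpha) M_alpha, with finite support
   contained in the set of compositions. *)
Definition qfun (k : fieldType) := seq nat -> k.

Definition is_qsym (k : fieldType) (f : qfun k) : Prop :=
  (exists s : seq (seq nat), forall a, f a != 0 -> a \in s) /\
  (forall a, f a != 0 -> composition a).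

Definition Mq (k : fieldType) (a : seq nat) : qfun k := fun b => (b == a)%:R.

Definition homog_part (k : fieldType) (n : nat) (f : qfun k) : qfun k :=
  fun a => if sumn a == n then f a else 0.

(* Elements of QSym (x) QSym, in the basis M_beta (x) M_gamma. *)
Definition tens (k : fieldType) (f g : qfun k) : seq nat * seq nat -> k :=
  fun p => f p.1 * g p.2.

(* Coproduct: Delta(M_alpha) = sum_{alpha = beta gamma} M_beta (x) M_gamma,
   so the coefficient of M_beta (x) M_gamma in Delta h is h(beta ++ gamma). *)
Definition coprodQ (k : fieldType) (f : qfun k) : seq nat * seq nat -> k :=
  fun p => f (p.1 ++ p.2).

(* zeta_Q(M_alpha) = 1 iff alpha = (n) or (); extended linearly. *)
Definition zetaQ (k : fieldType) (f : qfun k) : k :=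
  \sum_(a \in [set a : seq nat | (size a <= 1)%N]) f a.

(* zetabar_Q(h) = (-1)^n zeta_Q(h) for h homogeneous of degree n. *)
Definition zetabarQ (k : fieldType) (f : qfun k) : k :=
  \sum_(a \in [set a : seq nat | (size a <= 1)%N]) ((-1) ^+ sumn a * f a).

Definition qsubspace (k : fieldType) (C : qfun k -> Prop) : Prop :=
  [/\ forall f, C f -> is_qsym f,
      C (fun _ => 0),
      forall f g, C f -> C g -> C (fun a => f a + g a) &
      forall (c : k) f, C f -> C (fun a => c * f a)].

Definition qgraded (k : fieldType) (C : qfun k -> Prop) : Prop :=
  forall f n, C f -> C (homog_part n f).

(* Delta(C) is contained in C (x) C = span { c (x) c' : c, c' in C }. *)
Definition qsubcoalg (k : fieldType) (C : qfun k -> Prop) : Prop :=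
  forall f, C f -> exists s : seq (qfun k * qfun k),
    (forall x, x \in s -> C x.1 /\ C x.2) /\
    forall p, coprodQ f p = \sum_(x <- s) tens x.1 x.2 p.

Definition even_subcoalg (k : fieldType) (C : qfun k -> Prop) : Prop :=
  [/\ qsubspace C, qgraded C, qsubcoalg C &
      forall f, C f -> zetabarQ f = zetaQ f].

(* Pi_+ : the largest such subcoalgebra, i.e. the union (= sum) of all of them. *)
Definition Pi_plus (k : fieldType) (f : qfun k) : Prop :=
  exists C : qfun k -> Prop, even_subcoalg C /\ C f.

Definition even_span (k : fieldType) (f : qfun k) : Prop :=
  exists (s : seq (seq nat)) (c : seq nat -> k),
    (forall a, a \in s -> composition a && even_comp a) /\
    forall b, f b = \sum_(a <- s) c a * Mq k a b.

Definition even_M_free (k : fieldType) : Prop :=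
  forall (s : seq (seq nat)) (c : seq nat -> k),
    uniq s -> (forall a, a \in s -> composition a && even_comp a) ->
    (forall b, \sum_(a <- s) c a * Mq k a b = 0) ->
    forall a, a \in s -> c a = 0.

(* Main.v *)
Require Import Defs.
From mathcomp Require Import all_boot all_order all_algebra.
From mathcomp Require Import boolp classical_sets fsbigop.
Local Open Scope ring_scope.
Import GRing.Theory.

Lemma sum_ind (k : fieldType) (T : eqType) (s : seq T) (c : T -> k) b :
  uniq s -> \sum_(a <- s) c a * (b == a)%:R = if b \in s then c b else 0.
Proof.
elim: s => [|x s IH] /=; first by rewrite big_nil.
case/andP => xs us; rewrite big_cons IH // inE.
case: (eqVneq b x) => [->|bx] /=.
  by rewrite (negPf xs) mulr1 addr0.
by rewrite mulr0 add0r.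
Qed.

Lemma even_spanP (k : fieldType) (f : qfun k) :
  even_span f <-> (exists s : seq (seq nat), forall a, f a != 0 -> a \in s) /\
                  (forall a, f a != 0 -> composition a && even_comp a).
Proof.
split.
  move=> [s [c [Hs Hf]]].
  have Hsupp : forall b, f b != 0 -> b \in s.
    move=> b; apply: contraR => bs; rewrite Hf big1_seq // => a /= aS.
    rewrite /Mq; case: (eqVneq b a) => [ba|]; last by rewrite mulr0.
    by rewrite ba aS in bs.
  split; first by exists s.
  by move=> a /Hsupp /Hs.
move=> [[s Hs] He].
exists (undup [seq a <- s | f a != 0]), f; split.
  by move=> a; rewrite mem_undup mem_filter => /andP[/He].
move=> b; rewrite (@sum_ind _ _ _ _ _ (undup_uniq _)) mem_undup mem_filter.
case: (eqVneq (f b) 0) => [->|fb] //=.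
by rewrite (Hs _ fb).
Qed.

Lemma all_take_ (P : pred nat) i (a : seq nat) : all P a -> all P (take i a).
Proof. by rewrite -{1}(cat_take_drop i a) all_cat => /andP[]. Qed.
Lemma all_drop_ (P : pred nat) i (a : seq nat) : all P a -> all P (drop i a).
Proof. by rewrite -{1}(cat_take_drop i a) all_cat => /andP[]. Qed.

Lemma even_sumn (a : seq nat) : even_comp a -> ~~ odd (sumn a).
Proof.
elim: a => [|x a IH] //= /andP[ox /IH oa].
by rewrite oddD (negPf ox) (negPf oa).
Qed.

Lemma two_char (k : fieldType) : (2%:R : k) = 0 -> 2%N \in [pchar k].
Proof. by move=> h; rewrite inE /= h eqxx. Qed.

Lemma even_span_sub (k : fieldType) : even_subcoalg (@even_span k).
Proof.
split.
- split.
  + move=> f /even_spanP [[s Hs] He]; split; first by exists s.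
    by move=> a /He /andP[].
  + by apply/even_spanP; split; [exists [::] => a /=; rewrite eqxx | move=> a /=; rewrite eqxx].
  + move=> f g /even_spanP [[s Hs] He] /even_spanP [[t Ht] Ge].
    apply/even_spanP; split.
      exists (s ++ t) => a; rewrite mem_cat.
      case: (eqVneq (f a) 0) => [->|/Hs -> //]; rewrite add0r => /Ht ->.
      by rewrite orbT.
    move=> a; case: (eqVneq (f a) 0) => [->|/He //]; rewrite add0r; exact: Ge.
  + move=> c f /even_spanP [[s Hs] He]; apply/even_spanP; split.
      by exists s => a; rewrite mulf_eq0 negb_or => /andP[_ /Hs].
    by move=> a /=; rewrite mulf_eq0 negb_or => /andP[_ /He].
- move=> f n /even_spanP [[s Hs] He]; apply/even_spanP; rewrite /homog_part.
  split; first by exists s => a /=; case: ifP => _; [exact: Hs | rewrite eqxx].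
  by move=> a /=; case: ifP => _; [exact: He | rewrite eqxx].
- move=> f /even_spanP [[s Hs] He].
  set su := undup [seq a <- s | f a != 0].
  have suE : forall a, a \in su -> composition a && even_comp a.
    by move=> a; rewrite mem_undup mem_filter => /andP[/He].
  exists (flatten [seq [seq ((fun b => f a * Mq k (take i a) b), Mq k (drop i a))
           | i <- iota 0 (size a).+1] | a <- su]).
  split.
    move=> x /flattenP [l /mapP [a asu ->] /mapP [i _ ->]] /=.
    have /andP [ca ea] := suE a asu.
    split; apply/even_spanP.
      split; first by exists [:: take i a] => b; rewrite /Mq inE;
        case: (b == take i a); rewrite ?mulr0 ?eqxx.
      move=> b; rewrite /Mq; case: (eqVneq b (take i a)) => [->|]; last by rewrite mulr0 eqxx.
      by rewrite /composition /even_comp !all_take_.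
    split; first by exists [:: drop i a] => b; rewrite /Mq inE;
        case: (b == drop i a); rewrite ?eqxx.
    move=> b; rewrite /Mq; case: (eqVneq b (drop i a)) => [->|]; last by rewrite eqxx.
    by rewrite /composition /even_comp !all_drop_.
  move=> [p1 p2]; rewrite /coprodQ /tens /= big_flatten /= big_map.
  have inner : forall a, \sum_(x <- [seq ((fun b => f a * Mq k (take i a) b), Mq k (drop i a))
           | i <- iota 0 (size a).+1]) x.1 p1 * x.2 p2 = f a * (p1 ++ p2 == a)%:R.
    move=> a; rewrite big_map /=.
    have E : {in iota 0 (size a).+1, forall i,
      f a * Mq k (take i a) p1 * Mq k (drop i a) p2 =
      f a * (p1 ++ p2 == a)%:R * (size p1 == i)%:R}.
      move=> i; rewrite mem_iota add0n ltnS => /andP[_ ia].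
      rewrite -!mulrA; congr (_ * _).
      rewrite /Mq -!natrM !mulnb; congr (_%:R); congr (nat_of_bool _); apply/idP/idP.
        move=> /andP[/eqP -> /eqP ->]; rewrite cat_take_drop eqxx /=.
        by rewrite size_takel.
      move=> /andP[/eqP <- /eqP <-].
      by rewrite take_size_cat // drop_size_cat // !eqxx.
    rewrite (eq_big_seq _ E).
    rewrite (@sum_ind k _ _ (fun _ => f a * (p1 ++ p2 == a)%:R) (size p1) (iota_uniq _ _)) mem_iota add0n ltnS.
    case: (eqVneq (p1 ++ p2) a) => [<-|]; last by rewrite mulr0; case: ifP.
    by rewrite size_cat leq_addr mulr1.
  under eq_bigr => a _ do rewrite inner.
  rewrite (@sum_ind k _ su f (p1 ++ p2) (undup_uniq _)) mem_undup mem_filter.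
  case: (eqVneq (f (p1 ++ p2)) 0) => [->|fb] //=.
  by rewrite (Hs _ fb).
- move=> f /even_spanP [_ He]; rewrite /zetabarQ /zetaQ.
  apply: eq_fsbigr => a _.
  case: (eqVneq (f a) 0) => [->|fa]; first by rewrite mulr0.
  have /andP[_ ea] := He a fa.
  by rewrite -signr_odd (negPf (even_sumn _ ea)) expr0 mul1r.
Qed.

Theorem proposition6p3 (k : fieldType) (hchar : ~~ (2%N \in [pchar k])) :
  [/\ even_M_free k,
      even_subcoalg (@even_span k) &
      forall f : qfun k, Pi_plus f <-> even_span f].
Proof.
split.
- move=> s c us Hs H a ai.
  by have := H a; rewrite /Mq (@sum_ind k _ s c a us) ai.
- exact: even_span_sub.
move=> f; split; last first.
  by move=> Hf; exists (@even_span k); split => //; exact: even_span_sub.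
move=> [C [[[Cq C0 Cadd Cscal] Cgr Cco Cz] Cf]].
have key : forall al g, C g -> g al != 0 -> even_comp al.
  elim => [|a1 rest IH] g Cg Hg //.
  have [S [HS Hco]] := Cco g Cg.
  have := Hco ([:: a1], rest); rewrite /coprodQ /tens /= => Hsum.
  case: (boolP (has (fun x => x.1 [:: a1] * x.2 rest != 0) S)) =>
    [/hasP [x xS Hx] | /hasPn Hn]; last first.
    exfalso; move: Hg; rewrite Hsum big1_seq ?eqxx // => x /= xS.
    by apply/eqP; move: (Hn x xS); rewrite negbK.
  have [C1 C2] := HS x xS.
  rewrite mulf_eq0 negb_or in Hx; case/andP: Hx => H1 H2.
  have erest := IH _ C2 H2.
  rewrite /even_comp /= -/(even_comp rest) erest andbT.
  have [_ comp] := Cq _ C1.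
  have := comp _ H1; rewrite /composition /= andbT => a1pos.
  have Ch := Cgr _ a1 C1.
  have Z := Cz _ Ch.
  rewrite /zetabarQ /zetaQ in Z.
  have vanish : forall a : seq nat, (size a <= 1)%N -> a <> [:: a1] ->
      homog_part a1 x.1 a = 0.
    move=> a sa na; rewrite /homog_part; case: eqP => // sumA.
    have na' : a != [:: a1] by apply/eqP.
    move: na'; apply: contraNeq => /comp.
    case: a sa sumA {na} => [|b [|c t]] //=.
      by move=> _ s0; rewrite -s0 in a1pos.
    by move=> _; rewrite addn0 => ->.
  have Zs : forall F : seq nat -> k,
      (forall a, homog_part a1 x.1 a = 0 -> F a = 0) ->
      \sum_(a \in [set a : seq nat | (size a <= 1)%N]) F a = F [:: a1].
    move=> F HF; rewrite -(fsbig_widen [set [:: a1]]) ?fsbig_set1 //.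
      by move=> a /= ->.
    move=> a [/= sa na]; apply: HF; exact: vanish.
  rewrite (Zs (homog_part a1 x.1)) in Z; last by move=> a.
  rewrite (Zs (fun a => (-1) ^+ sumn a * homog_part a1 x.1 a)) in Z; last first.
    by move=> a ->; rewrite mulr0.
  rewrite /homog_part /= addn0 eqxx in Z.
  case: (boolP (odd a1)) => // oa.
  rewrite -signr_odd oa expr1 in Z.
  move/eqP: Z; rewrite mulN1r eq_sym -subr_eq0 opprK -mulr2n -mulr_natl.
  rewrite mulf_eq0 (negPf H1) orbF => /eqP h2.
  by move: hchar; rewrite two_char.
apply/even_spanP.
have [[s Hs] Hc] := Cq _ Cf.
split; first by exists s.
by move=> a fa; rewrite Hc // (key _ _ Cf fa).
Qed.
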